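(* Let $(\mathbb{X},d,\mu)$ be a metric measure space such that $\mu$ is ring-continuous. Let $\Omega\subset\mathbb{X}$ be a domain and $\varrho$ a continuous admissible radius function in $\Omega$. Then $\mathcal{M}$ maps $L^\infty(\Omega)$ into $C(\Omega)$.
   Context: A metric measure space $(\mathbb{X},d,\mu)$ is a metric space with a positive Borel regular measure $\mu$ with $0<\mu(B)<\infty$ for every ball $B$. $\mu$ is ring-continuous if for each $x\in\mathbb{X}$ the function $r\mapsto\mu(B(x,r))$ is continuous on $(0,\infty)$. An admissible radius function in $\Omega$ is $\varrho\in C(\overline\Omega)$, $\varrho\ge0$, with $0<\varrho(x)\leq\mathrm{dist}(x,\partial\Omega)$ for $x\in\Omega$ and $\varrho=0$ exactly on $\partial\Omega$. For $x\in\Omega$, $B_x=\overline{B}(x,\varrho(x))$ and $\mathcal{M}u(x)=\frac{1}{\mu(B_x)}\int_{B_x}u\,d\mu$. *)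

(* Defs.v *)
From HB Require Import structures.
From mathcomp Require Import all_boot all_order all_algebra.
From mathcomp Require Import all_classical all_reals all_analysis.
Set Implicit Arguments. Unset Strict Implicit. Unset Printing Implicit Defensive.
Import Order.TTheory GRing.Theory Num.Theory.
Local Open Scope classical_set_scope.
Local Open Scope ring_scope.

Section MMS.
Context {d : measure_display} {X : measurableType d} {R : realType}.
Variable dist : X -> X -> R.

Definition is_metric : Prop :=
  (forall x y, 0 <= dist x y) /\ (forall x y, dist x y = 0 <-> x = y) /\
  (forall x y, dist x y = dist y x) /\
  (forall x y z, dist x z <= dist x y + dist y z).

Definition oball (x : X) (r : R) : set X := [set y | dist x y < r].
Definition cball (x : X) (r : R) : set X := [set y | dist x y <= r].

Definition d_open (A : set X) : Prop :=
  forall x, A x -> exists2 r : R, 0 < r & oball x r `<=` A.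

Definition d_closure (A : set X) : set X :=
  [set x | forall r : R, 0 < r -> exists2 y, A y & dist x y < r].

Definition d_interior (A : set X) : set X :=
  [set x | exists2 r : R, 0 < r & oball x r `<=` A].

Definition d_boundary (A : set X) : set X := d_closure A `\` d_interior A.

(* connected: not the union of two disjoint nonempty open subsets of A
   (relatively open sets of A are the traces U `&` A of open sets U) *)
Definition d_connected (A : set X) : Prop :=
  forall U V : set X, d_open U -> d_open V ->
    A `<=` U `|` V -> U `&` V `&` A = set0 ->
    U `&` A = set0 \/ V `&` A = set0.

Definition d_domain (A : set X) : Prop :=
  d_open A /\ d_connected A /\ A !=set0.

Definition d_continuous_on (A : set X) (f : X -> R) : Prop :=
  forall x, A x -> forall e : R, 0 < e -> exists2 del : R, 0 < del &
    forall y, A y -> dist x y < del -> `|f y - f x| < e.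

(* (X, dist, mu) is a metric measure space: every Borel set is measurable
   (equivalently every open set is), and balls have positive finite measure *)
Definition metric_measure_space (mu : {measure set X -> \bar R}) : Prop :=
  is_metric /\ (forall A, d_open A -> measurable A) /\
  (forall x (r : R), 0 < r -> (0 < mu (oball x r))%E /\ (mu (oball x r) < +oo)%E).

Definition ring_continuous (mu : {measure set X -> \bar R}) : Prop :=
  forall x (r : R), 0 < r -> forall e : R, 0 < e -> exists2 del : R, 0 < del &
    forall s : R, 0 < s -> `|s - r| < del ->
      `|fine (mu (oball x s)) - fine (mu (oball x r))| < e.

Definition admissible_radius (Omega : set X) (rho : X -> R) : Prop :=
  d_continuous_on (d_closure Omega) rho /\
  (forall x, d_closure Omega x -> 0 <= rho x) /\
  (forall x, Omega x -> 0 < rho x /\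
     (* rho x <= dist(x, boundary Omega), i.e. below every boundary distance *)
     forall y, d_boundary Omega y -> rho x <= dist x y) /\
  (forall x, d_closure Omega x -> (rho x = 0 <-> d_boundary Omega x)).

Definition Linfty (mu : {measure set X -> \bar R}) (Omega : set X) (u : X -> R)
  : Prop :=
  measurable_fun Omega u /\
  exists M : R, {ae mu, forall x, Omega x -> `|u x| <= M}.

(* B_x = closed ball of radius rho x; u is taken to vanish outside Omega *)
Definition Bx (rho : X -> R) (x : X) : set X := cball x (rho x).

Definition mean_op (mu : {measure set X -> \bar R}) (Omega : set X)
  (rho : X -> R) (u : X -> R) (x : X) : R :=
  fine (\int[mu]_(y in Bx rho x `&` Omega) (u y)%:E) / fine (mu (Bx rho x)).

End MMS.

(* Main.v *)
Require Import Defs.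
From HB Require Import structures.
From mathcomp Require Import all_boot all_order all_algebra.
From mathcomp Require Import all_classical all_reals all_analysis.
From mathcomp Require Import measurable_realfun.
From mathcomp Require Import ring lra.
Set Implicit Arguments. Unset Strict Implicit. Unset Printing Implicit Defensive.
Import Order.TTheory GRing.Theory Num.Theory.
Local Open Scope classical_set_scope.
Local Open Scope ring_scope.

Section Helpers.
Context {d : measure_display} {X : measurableType d} {R : realType}.
Variable dist : X -> X -> R.
Variable mu : {measure set X -> \bar R}.
Hypothesis mms : metric_measure_space dist mu.

Lemma oball_open x r : d_open dist (oball dist x r).
Proof.
case: mms => [[d0 [dE [dC dT]]] _] y; rewrite /oball /= => yr.
exists (r - dist x y); first by rewrite subr_gt0.
move=> z; rewrite /oball /= => yz; have := dT x y z; lra.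
Qed.

Lemma oball_meas x r : measurable (oball dist x r).
Proof. by case: mms => _ [+ _]; apply; exact: oball_open. Qed.

Lemma cball_meas x r : measurable (cball dist x r).
Proof.
case: mms => [[d0 [dE [dC dT]]] [mo _]].
have -> : cball dist x r = ~` [set y | r < dist x y].
  apply/seteqP; split => y; rewrite /cball /=.
    by move=> h; apply/negP; rewrite -leNgt.
  by move/negP; rewrite -leNgt.
apply: measurableC; apply: mo => y /= yr.
exists (dist x y - r); first by rewrite subr_gt0.
move=> z; rewrite /oball /= => yz; have := dT x z y; rewrite (dC z y); lra.
Qed.

Lemma int_bound (D E : set X) (f : X -> R) (M : R) :
  measurable D -> measurable E -> E `<=` D -> measurable_fun D f -> 0 <= M ->
  {ae mu, forall x, D x -> `|f x| <= M} ->
  (`| \int[mu]_(y in E) (f y)%:E | <= M%:E * mu E)%E.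
Proof.
move=> mD mE ED mf M0 ae.
have mfE : measurable_fun E (fun y => (f y)%:E).
  by apply/measurable_EFinP; exact: measurable_funS mf.
apply: (le_trans (le_abse_integral _ _ mfE)) => //.
rewrite -integral_cst //.
apply: ae_ge0_le_integral => //.
  exact: measurableT_comp.
move: ae; rewrite /almost_everywhere /negligible => -[N [mN N0 sub]].
exists N; split => // x /= nx; apply: sub => /= h.
by apply: nx => Ex; rewrite lee_fin; exact: h (ED _ Ex).
Qed.


Lemma int_fin (D E : set X) (f : X -> R) (M : R) :
  measurable D -> measurable E -> E `<=` D -> measurable_fun D f -> 0 <= M ->
  {ae mu, forall x, D x -> `|f x| <= M} -> (mu E < +oo)%E ->
  (\int[mu]_(y in E) (f y)%:E)%E \is a fin_num.
Proof.
move=> mD mE ED mf M0 ae Eoo; rewrite fin_num_abs.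
apply: (le_lt_trans (int_bound mD mE ED mf M0 ae)).
have : mu E \is a fin_num by rewrite ge0_fin_numE.
by move/fineK <-; rewrite -EFinM ltry.
Qed.

Lemma sandwich (D S A T : set X) (f : X -> R) (M : R) :
  measurable D -> measurable S -> measurable A -> measurable T ->
  S `<=` A -> A `<=` T -> (mu T < +oo)%E ->
  measurable_fun D f -> 0 <= M ->
  {ae mu, forall x, D x -> `|f x| <= M} ->
  `| fine (\int[mu]_(y in A `&` D) (f y)%:E) -
     fine (\int[mu]_(y in S `&` D) (f y)%:E) | <=
  M * (fine (mu T) - fine (mu S)).
Proof.
move=> mD mS mA mT SA AT Too mf M0 ae.
have mAS : measurable ((A `\` S) `&` D) by apply: measurableI => //; exact: measurableD.
have mSD : measurable (S `&` D) by exact: measurableI.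
have Soo : (mu S < +oo)%E by apply: le_lt_trans Too; apply: le_measure; rewrite ?inE //; exact: (subset_trans SA AT).
have Eq : A `&` D = (S `&` D) `|` ((A `\` S) `&` D).
  apply/seteqP; split => x /=.
    by move=> [Ax Dx]; case: (pselect (S x)) => Sx; [left|right].
  by case=> -[+ Dx]; [move=> /SA|case] .
have -> : (\int[mu]_(y in A `&` D) (f y)%:E)%E =
   (\int[mu]_(y in S `&` D) (f y)%:E + \int[mu]_(y in (A `\` S) `&` D) (f y)%:E)%E.
  rewrite Eq integral_setU //.
    rewrite -Eq; apply/measurable_EFinP; by apply: measurable_funS mf => // x [].
  by apply/disj_setPS => x [[+ _] [[_ +] _]].
have SDoo : (mu (S `&` D) < +oo)%E.
  by apply: le_lt_trans Soo; apply: le_measure; rewrite ?inE //; exact: subIsetl.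
have fS := int_fin mD mSD (@subIsetr _ _ _) mf M0 ae SDoo.
have ASoo : (mu ((A `\` S) `&` D) < +oo)%E.
  apply: le_lt_trans Too; apply: le_measure; rewrite ?inE //.
  by move=> x [[/AT]].
have fJ := int_fin mD mAS (@subIsetr _ _ _) mf M0 ae ASoo.
have bJ := int_bound mD mAS (@subIsetr _ _ _) mf M0 ae.
have mTS : (mu ((A `\` S) `&` D) <= mu T - mu S)%E.
  have -> : (mu T - mu S = mu (T `\` S))%E.
    by rewrite measureD // setIidr //; exact: (subset_trans SA AT).
  apply: le_measure; rewrite ?inE //; first exact: measurableD.
  by move=> x [[/AT]].
rewrite fineD // addrAC subrr add0r.
move: bJ mTS fJ; set J := (\int[mu]_(y in _) _)%E.
have eT : ((fine (mu T))%:E = mu T)%E by apply: fineK; rewrite ge0_fin_numE.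
have eS : ((fine (mu S))%:E = mu S)%E by apply: fineK; rewrite ge0_fin_numE.
have eE : ((fine (mu ((A `\` S) `&` D)))%:E = mu ((A `\` S) `&` D))%E.
  by apply: fineK; rewrite ge0_fin_numE.
move=> + + /fineK eJ; rewrite -eT -eS -eE -eJ.
rewrite /= -EFinB -EFinM -abse_EFin => h1 h2.
rewrite -lee_fin; apply: (le_trans h1).
by rewrite lee_fin; apply: ler_wpM2l => //; rewrite -lee_fin.
Qed.

End Helpers.

Lemma quot_cont (R : realType) (a b e : R) : 0 < b -> 0 < e ->
  exists2 eta : R, 0 < eta & forall a' b', `|a' - a| <= eta -> `|b' - b| <= eta ->
    `|a' / b' - a / b| < e.
Proof.
move=> b0 e0.
have k0 : 0 < 4 * (`|a| + b) by rewrite mulr_gt0 // ltr_wpDl.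
set k := e * b * b / (4 * (`|a| + b)).
have kp : 0 < k by rewrite divr_gt0 // !mulr_gt0.
exists (Num.min (b / 2) k); first by rewrite lt_min kp andbT divr_gt0.
move=> a' b'; rewrite !le_min => /andP[ha hk] /andP[hb hk'].
have hb' : b / 2 <= b'.
  move: hb; rewrite ler_norml => /andP[h1 _]; lra.
have b'0 : 0 < b' by apply: lt_le_trans hb'; rewrite divr_gt0.
have -> : a' / b' - a / b = ((a' - a) * b - a * (b' - b)) / (b' * b).
  by field; apply/andP; split; rewrite gt_eqF.
rewrite normrM normfV (gtr0_norm (mulr_gt0 b'0 b0)) ltr_pdivrMr ?mulr_gt0 //.
have hkk : k * (4 * (`|a| + b)) = e * b * b.
  by rewrite /k mulfVK // gt_eqF.
have h1 : `|(a' - a) * b - a * (b' - b)| <= k * (`|a| + b).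
  apply: (le_trans (ler_normB _ _)); rewrite !normrM (gtr0_norm b0).
  have := normr_ge0 a; have := normr_ge0 (a' - a); have := normr_ge0 (b' - b).
  nra.
apply: (le_lt_trans h1).
have : 0 < e * b * b by rewrite !mulr_gt0.
nra.
Qed.


Unset Implicit Arguments.
Set Strict Implicit.

Theorem proposition3p4 (d : measure_display) (X : measurableType d)
  (R : realType) (dist : X -> X -> R) (mu : {measure set X -> \bar R})
  (Omega : set X) (rho : X -> R) :
  metric_measure_space dist mu ->
  ring_continuous dist mu ->
  d_domain dist Omega ->
  admissible_radius dist Omega rho ->
  forall u : X -> R, Linfty mu Omega u ->
    d_continuous_on dist Omega (mean_op dist mu Omega rho u).
Proof.
move=> mms rc [Oo _] [rc_rho [_ [rhoO _]]] u [mu_u [M0 aeM]] x Ox e e0.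
have mms' := mms.
case: mms' => [[d0 [dE [dC dT]]] [mopen mball]].
set M := Num.max M0 0.
have M0p : 0 <= M by rewrite le_max lexx orbT.
have ae : {ae mu, forall y, Omega y -> `|u y| <= M}.
  move: aeM; rewrite /almost_everywhere /negligible => -[N [mN N0 sub]].
  exists N; split => // z /= nz; apply: sub => /= h; apply: nz => Oz.
  by rewrite le_max (h Oz).
have mO : measurable Omega by exact: mopen.
have clO : forall z, Omega z -> d_closure dist Omega z.
  by move=> z Oz r r0; exists z => //; rewrite (proj2 (dE z z)).
have r0 : 0 < rho x by case: (rhoO x Ox).
set r := rho x.
set F := fun z => fine (\int[mu]_(y in Bx dist rho z `&` Omega) (u y)%:E).
set m := fun z => fine (mu (Bx dist rho z)).
have mB : forall z, measurable (Bx dist rho z) by move=> z; exact: (cball_meas mms).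
have Bfin : forall z, (mu (Bx dist rho z) < +oo)%E.
  move=> z; apply: (@le_lt_trans _ _ (mu (oball dist z (`|rho z| + 1)))).
    apply: le_measure; rewrite ?inE //; first exact: (oball_meas mms).
    move=> y; rewrite /Bx /cball /oball /= => h.
    by apply: (le_lt_trans h); rewrite ltr_pwDr // (le_trans (ler_norm _)).
  by apply: (proj2 (mball _ _ _)); rewrite ltr_pwDr.
have mx0 : 0 < m x.
  apply: fine_gt0; rewrite Bfin andbT.
  apply: (lt_le_trans (proj1 (mball x r r0))).
  apply: le_measure; rewrite ?inE //; first exact: (oball_meas mms).
  by move=> y; rewrite /Bx /cball /oball /= => /ltW.
have [eta eta0 Heta] := quot_cont (F x) mx0 e0.
set e' := eta / (4 * (M + 1)).
have k0 : 0 < 4 * (M + 1) by rewrite mulr_gt0 // ltr_wpDl.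
have e'0 : 0 < e' by rewrite divr_gt0.
have e'eta : e' * (4 * (M + 1)) = eta by rewrite /e' mulfVK // gt_eqF.
have [d1 d10 Hd1] := rc x r r0 e' e'0.
set t := Num.min (d1 / 2) (r / 2).
have t0 : 0 < t by rewrite lt_min !divr_gt0.
have td1 : t <= d1 / 2 by rewrite ge_min lexx.
have tr : t <= r / 2 by rewrite ge_min lexx orbT.
have [d2 d20 Hd2] := rc_rho x (clO x Ox) (t / 2) (divr_gt0 t0 (ltr0n _ 2)).
exists (Num.min d2 (t / 2)); first by rewrite lt_min d20 divr_gt0.
move=> y Oy; rewrite lt_min => /andP[dxy2 dxyt].
have hry : `|rho y - r| < t / 2 by exact: Hd2 y (clO y Oy) dxy2.
move: hry; rewrite ltr_norml => /andP[hry1 hry2].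
set S := oball dist x (r - t).
set T := oball dist x (r + t).
have mS : measurable S by exact: (oball_meas mms).
have mT : measurable T by exact: (oball_meas mms).
have Too : (mu T < +oo)%E by apply: (proj2 (mball _ _ _)); lra.
have SA : S `<=` Bx dist rho y.
  move=> z; rewrite /S /Bx /oball /cball /= => h.
  have := dT y x z; rewrite (dC y x); lra.
have AT : Bx dist rho y `<=` T.
  move=> z; rewrite /T /Bx /oball /cball /= => h.
  have := dT x y z; lra.
have SB : S `<=` Bx dist rho x.
  move=> z; rewrite /S /Bx /oball /cball /= => h; rewrite -/r; lra.
have BT : Bx dist rho x `<=` T.
  move=> z; rewrite /T /Bx /oball /cball /= -/r => h; lra.
have h1 := sandwich mO mS (mB y) mT SA AT Too mu_u M0p ae.
have h2 := sandwich mO mS (mB x) mT SB BT Too mu_u M0p ae.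
have hT : `|fine (mu T) - fine (mu (oball dist x r))| < e'.
  by apply: Hd1; [lra | rewrite ltr_norml; apply/andP; split; lra].
have hS : `|fine (mu S) - fine (mu (oball dist x r))| < e'.
  by apply: Hd1; [lra | rewrite ltr_norml; apply/andP; split; lra].
move: hT hS; rewrite !ltr_norml => /andP[hT1 hT2] /andP[hS1 hS2].
have finT : mu T \is a fin_num by rewrite ge0_fin_numE.
have finS : mu S \is a fin_num.
  rewrite ge0_fin_numE //; apply: le_lt_trans Too.
  by apply: le_measure; rewrite ?inE //; exact: subset_trans SB BT.
have finB : forall z, mu (Bx dist rho z) \is a fin_num.
  by move=> z; rewrite ge0_fin_numE.
have mono : forall A, measurable A -> S `<=` A -> A `<=` T ->
    fine (mu S) <= fine (mu A) <= fine (mu T).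
  move=> A mA SA' AT'; have finA : mu A \is a fin_num.
    rewrite ge0_fin_numE //; apply: le_lt_trans Too.
    by apply: le_measure; rewrite ?inE.
  by apply/andP; split; apply: fine_le => //; apply: le_measure; rewrite ?inE.
have /andP[my1 my2] := mono _ (mB y) SA AT.
have /andP[mx1 mx2] := mono _ (mB x) SB BT.
have Dlt : fine (mu T) - fine (mu S) < 2 * e' by lra.
have D0 : 0 <= fine (mu T) - fine (mu S) by lra.
rewrite /mean_op -/(F y) -/(F x) -/(m y) -/(m x).
rewrite -ltr_norml.
apply: Heta.
  rewrite /F.
  move: h1 h2; set IS := fine (\int[mu]_(y0 in S `&` Omega) (u y0)%:E).
  set Dl := fine (mu T) - fine (mu S).
  move=> h1 h2.
  have : `|F y - F x| <= M * Dl + M * Dl.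
    have -> : F y - F x = (F y - IS) - (F x - IS) by rewrite opprB addrA subrK.
    by apply: (le_trans (ler_normB _ _)); apply: lerD.
  move=> h3; apply: (le_trans h3).
  have : M * Dl <= M * (2 * e') by apply: ler_wpM2l => //; exact: ltW.
  rewrite -e'eta; nra.
rewrite /m ler_norml; apply/andP; split.
  rewrite -e'eta; nra.
rewrite -e'eta; nra.
Qed.
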